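(* Let $\mathbb{F}\in\{\mathbb{R},\mathbb{C}\}$, $A\in\mathbb{F}^{m\times n}$ with $\|A\|_{\infty,col}\le1$, $\mu>0$, $x_0\in\mathbb{F}^n$ with $S=\mathrm{supp}\,x_0$ and $\#S=K$, $\epsilon\in\mathbb{F}^m$, $b=Ax_0+\epsilon$, and let $N\ge1$ with $\beta_N>0$ and $\beta_K>0$. Let $x'=x_S$ be the oracle solution and $z'=(I-A^*A)x'+A^*b$. If $\|\epsilon\|_2<\beta_N^2\sqrt{\mu}$ and $$|x_{0,j}|>\frac{\sqrt{\mu}}{\beta_N^2}+\frac{\beta_N^2\sqrt{\mu}}{\beta_K}\quad\text{for all }j\in S,$$ then $|z'_i|\notin\big[\beta_N^2\sqrt{\mu},\ \sqrt{\mu}/\beta_N^2\big]$ for all $1\le i\le n$.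
   Context: $\|A\|_{\infty,col}=\max_i\|a_i\|_2$ over the columns $a_i$ of $A$. $\mathrm{card}(x)$ is the number of nonzero entries; $\beta_k=\inf\{\|Ax\|_2/\|x\|_2:x\ne0,\ \mathrm{card}(x)\le k\}$. $A_S$ denotes $A$ with all columns with index outside $S$ set to zero, and the oracle solution is $x_S=(A_S^*A_S)^\dagger A_S^*b$, where $\dagger$ is the Moore–Penrose inverse and $A^*$ the conjugate transpose. *)

(* Defs.v *)
From HB Require Import structures.
From mathcomp Require Import all_boot all_order all_algebra.
From mathcomp Require Import classical_sets reals.
From mathcomp Require Import complex.
Set Implicit Arguments. Unset Strict Implicit. Unset Printing Implicit Defensive.
Import Order.TTheory GRing.Theory Num.Theory.
Local Open Scope ring_scope.

Section Defs.
(* R : the real numbers; F : the scalar field (R or C);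
   cj : scalar conjugation on F; md : modulus F -> R. *)
Variables (R : realType) (F : pzRingType) (cj : F -> F) (md : F -> R).

Definition adj {m n : nat} (A : 'M[F]_(m, n)) : 'M[F]_(n, m) := map_mx cj A^T.

Definition norm2 {m : nat} (x : 'cV[F]_m) : R :=
  Num.sqrt (\sum_(i < m) md (x i 0) ^+ 2).

Definition norm_inf_col {m n : nat} (A : 'M[F]_(m, n)) : R :=
  \big[Num.max/0]_(j < n) norm2 (col j A).

Definition supp {n : nat} (x : 'cV[F]_n) : {set 'I_n} := [set i | x i 0 != 0].
Definition card {n : nat} (x : 'cV[F]_n) : nat := #|supp x|.

Definition beta {m n : nat} (A : 'M[F]_(m, n)) (k : nat) : R :=
  inf [set norm2 (A *m x) / norm2 x | x in [set x : 'cV[F]_n | x != 0 /\ (card x <= k)%N]]%classic.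

Definition restr_cols {m n : nat} (A : 'M[F]_(m, n)) (S : {set 'I_n}) : 'M[F]_(m, n) :=
  \matrix_(i, j) (if j \in S then A i j else 0).

Definition is_MP_inverse {m n : nat} (M : 'M[F]_(m, n)) (X : 'M[F]_(n, m)) : Prop :=
  [/\ M *m X *m M = M, X *m M *m X = X,
      adj (M *m X) = M *m X & adj (X *m M) = X *m M].

End Defs.

Definition Cnorm (R : realType) (z : complex.complex R) : R := complex.ComplexField.Normc.normc z.

(* Main.v *)
Require Import Defs.
From HB Require Import structures.
From mathcomp Require Import all_boot all_order all_algebra.
From mathcomp Require Import classical_sets reals.
From mathcomp Require Import complex.
From mathcomp Require Import ring lra.
Import Order.TTheory GRing.Theory Num.Theory.
Local Open Scope ring_scope.

Lemma CS_real (R : realType) p (x y : 'I_p -> R) :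
  (forall k, 0 <= x k) -> (forall k, 0 <= y k) ->
  \sum_k x k * y k <= Num.sqrt (\sum_k x k ^+ 2) * Num.sqrt (\sum_k y k ^+ 2).
Proof.
move=> hx hy.
have X0 : 0 <= \sum_k x k ^+ 2 by apply: sumr_ge0 => k _; rewrite sqr_ge0.
have Y0 : 0 <= \sum_k y k ^+ 2 by apply: sumr_ge0 => k _; rewrite sqr_ge0.
set s := Num.sqrt _; set t := Num.sqrt _.
have s0 : 0 <= s by exact: sqrtr_ge0.
have t0 : 0 <= t by exact: sqrtr_ge0.
have S0 : 0 <= \sum_k x k * y k by apply: sumr_ge0 => k _; rewrite mulr_ge0.
have key : \sum_k (2 * (x k * t) * (y k * s)) <= \sum_k ((x k * t) ^+ 2 + (y k * s) ^+ 2).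
  have h2 : forall a b : R, 2 * a * b <= a ^+ 2 + b ^+ 2 by move=> a b; have := sqr_ge0 (a - b); rewrite sqrrB; lra.
  by apply: ler_sum => k _; apply: h2.
have e1 : \sum_k (2 * (x k * t) * (y k * s)) = 2 * s * t * \sum_k x k * y k.
  by rewrite mulr_sumr; apply: eq_bigr => k _; ring.
have e2 : \sum_k ((x k * t) ^+ 2 + (y k * s) ^+ 2) = 2 * (s ^+ 2 * t ^+ 2).
  rewrite big_split /= -!(eq_bigr _ (fun k _ => esym (exprMn _ _ _))) -!mulr_suml.
  have hs : s ^+ 2 = \sum_(i < p) x i ^+ 2 by exact: sqr_sqrtr.
  have ht : t ^+ 2 = \sum_(i < p) y i ^+ 2 by exact: sqr_sqrtr.
  rewrite -hs -ht; ring.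
rewrite e1 e2 in key.
have [st0|] := ltrP 0 (s * t).
  nra.
rewrite le_eqVlt (ltNge _ 0) mulr_ge0 // orbF mulf_eq0 => /orP[]/eqP h.
  have: \sum_k x k ^+ 2 = 0 by rewrite -(sqr_sqrtr X0) -/s h expr0n.
  move/psumr_eq0P => hx0; rewrite big1 ?h ?mul0r // => k _.
  by have /eqP := hx0 (fun i _ => sqr_ge0 _) k isT; rewrite sqrf_eq0 => /eqP ->; rewrite mul0r.
have: \sum_k y k ^+ 2 = 0 by rewrite -(sqr_sqrtr Y0) -/t h expr0n.
move/psumr_eq0P => hy0; rewrite big1 ?h ?mulr0 // => k _.
by have /eqP := hy0 (fun i _ => sqr_ge0 _) k isT; rewrite sqrf_eq0 => /eqP ->; rewrite mulr0.
Qed.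

Section Gen.
Variables (R : realType) (F : fieldType) (cj : F -> F) (md : F -> R) (emb : R -> F).
Hypothesis cjD : forall a b, cj (a + b) = cj a + cj b.
Hypothesis cjM : forall a b, cj (a * b) = cj a * cj b.
Hypothesis cjK : forall a, cj (cj a) = a.
Hypothesis md_ge0 : forall a, 0 <= md a.
Hypothesis md_eq0 : forall a, md a = 0 -> a = 0.
Hypothesis md0 : md 0 = 0.
Hypothesis mdM : forall a b, md (a * b) = md a * md b.
Hypothesis mdD : forall a b, md (a + b) <= md a + md b.
Hypothesis mdN : forall a, md (- a) = md a.
Hypothesis mdcj : forall a, md (cj a) = md a.
Hypothesis embD : forall r s, emb (r + s) = emb r + emb s.
Hypothesis emb_inj : injective emb.
Hypothesis embsq : forall a, emb (md a ^+ 2) = cj a * a.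


Lemma cj0 : cj 0 = 0.
Proof. by have := cjD 0 0; rewrite addr0 => /eqP; rewrite -subr_eq addrN eq_sym => /eqP. Qed.

Lemma emb0 : emb 0 = 0.
Proof. by have := embD 0 0; rewrite addr0 => /eqP; rewrite -subr_eq addrN eq_sym => /eqP. Qed.

Lemma cjN a : cj (- a) = - cj a.
Proof. by apply/eqP; rewrite -addr_eq0 -cjD addNr cj0. Qed.

Lemma cj_sum (I : Type) (r : seq I) (P : pred I) (f : I -> F) :
  cj (\sum_(i <- r | P i) f i) = \sum_(i <- r | P i) cj (f i).
Proof. exact: (big_morph cj cjD cj0). Qed.

Lemma emb_sum (I : Type) (r : seq I) (P : pred I) (f : I -> R) :
  emb (\sum_(i <- r | P i) f i) = \sum_(i <- r | P i) emb (f i).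
Proof. exact: (big_morph emb embD emb0). Qed.

Lemma md_sum (I : Type) (r : seq I) (P : pred I) (f : I -> F) :
  md (\sum_(i <- r | P i) f i) <= \sum_(i <- r | P i) md (f i).
Proof.
elim/big_rec2: _ => [|i y1 y2 _ h]; first by rewrite md0.
exact: le_trans (mdD _ _) (lerD (lexx _) h).
Qed.

Local Notation adj := (adj cj).

Lemma adjE m n (A : 'M[F]_(m, n)) i j : adj A i j = cj (A j i).
Proof. by rewrite /adj !mxE. Qed.

Lemma adj_mul m n p (A : 'M[F]_(m, n)) (B : 'M[F]_(n, p)) :
  adj (A *m B) = adj B *m adj A.
Proof.
apply/matrixP => i j; rewrite adjE !mxE cj_sum; apply: eq_bigr => k _.
by rewrite /adj !mxE cjM mulrC.
Qed.

Lemma adjK m n (A : 'M[F]_(m, n)) : adj (adj A) = A.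
Proof. by apply/matrixP => i j; rewrite /adj !mxE cjK. Qed.

Lemma adjD m n (A B : 'M[F]_(m, n)) : adj (A + B) = adj A + adj B.
Proof. by apply/matrixP => i j; rewrite /adj !mxE cjD. Qed.

Lemma adjN m n (A : 'M[F]_(m, n)) : adj (- A) = - adj A.
Proof. by apply/matrixP => i j; rewrite /adj !mxE cjN. Qed.

Lemma adjB m n (A B : 'M[F]_(m, n)) : adj (A - B) = adj A - adj B.
Proof. by rewrite adjD adjN. Qed.

Lemma adj0 m n : adj (0 : 'M[F]_(m, n)) = 0.
Proof. by apply/matrixP => i j; rewrite /adj !mxE cj0. Qed.

Definition ns {p} (w : 'cV[F]_p) : R := \sum_(i < p) md (w i 0) ^+ 2.

Lemma ns_ge0 p (w : 'cV[F]_p) : 0 <= ns w.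
Proof. by apply: sumr_ge0 => i _; rewrite sqr_ge0. Qed.

Lemma emb_ns p (w : 'cV[F]_p) : emb (ns w) = (adj w *m w) 0 0.
Proof. by rewrite emb_sum mxE; apply: eq_bigr => k _; rewrite embsq adjE. Qed.

Lemma mx_adj0 p q (W : 'M[F]_(p, q)) : adj W *m W = 0 -> W = 0.
Proof.
move=> h; apply/matrixP => k j; rewrite mxE.
have : emb (\sum_l md (W l j) ^+ 2) = emb 0.
  have := congr1 (fun M : 'M[F]_(q, q) => M j j) h; rewrite /= !mxE => e.
  by rewrite emb0 -e emb_sum; apply: eq_bigr => l _; rewrite embsq /adj !mxE.
move/emb_inj/psumr_eq0P => h0.
have /eqP := h0 (fun i _ => sqr_ge0 _) k isT.
by rewrite sqrf_eq0 => /eqP /md_eq0.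
Qed.

Lemma pythag p (u v : 'cV[F]_p) : adj u *m v = 0 -> ns (u + v) = ns u + ns v.
Proof.
move=> h; apply: emb_inj; rewrite embD !emb_ns adjD mulmxDl !mulmxDr.
have h' : adj v *m u = 0 by rewrite -[u]adjK -adj_mul h adj0.
by rewrite h h' !mxE !add0r addr0 /=.
Qed.


Lemma gen m n (A : 'M[F]_(m, n)) (mu : R) (x0 : 'cV[F]_n)
          (eps : 'cV[F]_m) (N : nat) (X : 'M[F]_n) :
    let S := supp x0 in
    let K := #|S| in
    let b := A *m x0 + eps in
    let AS := restr_cols A S in
    let bN := beta md A N in
    norm_inf_col md A <= 1 -> 0 < mu -> (1 <= N)%N ->
    0 < bN -> 0 < beta md A K ->
    is_MP_inverse cj (adj AS *m AS) X ->
    let x' := X *m adj AS *m b in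
    let z' := (1%:M - adj A *m A) *m x' + adj A *m b in
    norm2 md eps < bN ^+ 2 * Num.sqrt mu ->
    (forall j, j \in S ->
       Num.sqrt mu / bN ^+ 2 + bN ^+ 2 * Num.sqrt mu / beta md A K < md (x0 j 0)) ->
    forall i : 'I_n,
      ~ (bN ^+ 2 * Num.sqrt mu <= md (z' i 0) <= Num.sqrt mu / bN ^+ 2).
Proof.
move=> S K b AS bN hA hmu _ hbN hbK [MXM XMX hMX hXM] x' z' heps hx0 i.
set M := adj AS *m AS in MXM XMX hMX hXM.
set c := bN ^+ 2; set sm := Num.sqrt mu.
have c0 : 0 < c by rewrite exprn_gt0.
have sm0 : 0 < sm by rewrite sqrtr_gt0.
have x0S k : k \notin S -> x0 k 0 = 0.
  by rewrite /S /supp inE negbK => /eqP.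
have ASE k l : AS k l = if l \in S then A k l else 0 by rewrite /AS /restr_cols mxE.
have MrowS k l : k \notin S -> M k l = 0.
  move=> hk; rewrite /M mxE big1 // => j _.
  by rewrite /adj !mxE (negbTE hk) cj0 mul0r.
have F1 : adj M = M by rewrite /M adj_mul adjK.
have F2 : M *m X *m adj AS = adj AS.
  set Y := adj AS - M *m X *m adj AS.
  have hY : adj Y = AS - AS *m (M *m X).
    by rewrite /Y adjB adj_mul adjK hMX.
  have : Y *m adj Y = 0.
    rewrite hY /Y !mulmxBl !mulmxBr !mulmxA.
    have MXM' : adj AS *m AS *m X *m adj AS *m AS = adj AS *m AS.
      by rewrite -mulmxA; exact: MXM.
    by rewrite /M ?mulmxA MXM' subrr.
  rewrite -{1}[Y]adjK => /mx_adj0 hY0.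
  by apply/eqP; rewrite eq_sym -subr_eq0 -/Y -[Y]adjK hY0 adj0.
have F3 : AS *m (X *m M) = AS.
  set Z := AS - AS *m (X *m M).
  have hZ : adj Z = adj AS - X *m M *m adj AS.
    by rewrite /Z adjB adj_mul hXM.
  have : adj Z *m Z = 0.
    rewrite hZ /Z !mulmxBl !mulmxBr.
    have MXM' : adj AS *m (AS *m (X *m (adj AS *m AS))) = adj AS *m AS.
      by rewrite !mulmxA -mulmxA; exact: MXM.
    by rewrite /M -?mulmxA MXM' !subrr; apply/matrixP => ? ?; rewrite !mxE.
  move/mx_adj0 => hZ0.
  by apply/eqP; rewrite eq_sym -subr_eq0 -/Z hZ0.
have F2' : adj AS *m AS *m X *m adj AS = adj AS by [].
have F3' : AS *m X *m adj AS *m AS = AS by rewrite -[RHS]F3 /M !mulmxA.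
have XM : X *m M = M *m adj X by rewrite -hXM adj_mul F1.
have x'E : x' = M *m (adj X *m x').
  by rewrite mulmxA -XM {1}/x' -F2 !mulmxA.
have x'S k : k \notin S -> x' k 0 = 0.
  move=> hk; rewrite x'E mxE big1 // => l _.
  by rewrite MrowS // mul0r.
have AxS (v : 'cV[F]_n) : (forall k, k \notin S -> v k 0 = 0) -> A *m v = AS *m v.
  move=> hv; apply/matrixP => k j; rewrite (ord1 j) !mxE; apply: eq_bigr => l _.
  by rewrite ASE; case: ifP => // /negbT /hv ->; rewrite !mulr0.
set d := x' - x0.
have dS k : k \notin S -> d k 0 = 0.
  by move=> hk; move: (x'S k hk) (x0S k hk); rewrite /d !mxE => -> ->; rewrite subrr.
have hb : b = AS *m x0 + eps by rewrite /b AxS.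
set P := AS *m X *m adj AS.
have hASd : AS *m d = P *m eps.
  rewrite /d mulmxBr /x' hb !mulmxDr !mulmxA F3' /P.
  by rewrite addrAC subrr add0r.
set r := b - A *m x'.
have hr : r = eps - P *m eps.
  have hAx : A *m x' = AS *m x0 + P *m eps.
    by rewrite AxS // -hASd /d mulmxBr addrC subrK.
  by rewrite /r hb hAx opprD addrA [AS *m x0 + _]addrC addrK.
have hadjr : adj AS *m r = 0.
  by rewrite hr mulmxBr /P !mulmxA F2' subrr.
have hperp : adj (P *m eps) *m r = 0.
  by rewrite /P -!mulmxA adj_mul -mulmxA hadjr mulmx0.
have hns : ns eps = ns (P *m eps) + ns r.
  by rewrite -pythag // hr addrC subrK.
have n2 p (w : 'cV[F]_p) : norm2 md w = Num.sqrt (ns w) by [].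
have nPe : norm2 md (P *m eps) <= norm2 md eps.
  by rewrite !n2 ler_sqrt ?ns_ge0 // hns lerDl ns_ge0.
have nr : norm2 md r <= norm2 md eps.
  by rewrite !n2 ler_sqrt ?ns_ge0 // hns lerDr ns_ge0.
have hz : z' = x' + adj A *m r.
  by rewrite /z' /r mulmxBl mul1mx mulmxBr !mulmxA -addrA [- _ + _]addrC.
have adjAr k : (adj A *m r) k 0 = \sum_l cj (A l k) * r l 0.
  by rewrite mxE; apply: eq_bigr => l _; rewrite /adj !mxE.
case/andP => h1 h2.
have [iS|niS] := boolP (i \in S).
  have hzi : z' i 0 = x0 i 0 + d i 0.
    have e1 : (adj A *m r) i 0 = 0.
      have e0 : (adj AS *m r) i 0 = 0 by rewrite hadjr mxE.
      rewrite -e0 adjAr mxE; apply: eq_bigr => l _.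
      by rewrite /adj !mxE iS.
    move: e1; rewrite hz /d !mxE => ->.
    by rewrite addr0; ring.
  have hd : md (d i 0) * beta md A K <= norm2 md eps.
    have [d0|dn0] := eqVneq d 0.
      by rewrite d0 mxE md0 mul0r n2 sqrtr_ge0.
    have [k hk] : exists k, d k 0 != 0.
      apply/existsP; apply: contraNT dn0 => /existsPn h.
      apply/eqP; apply/matrixP => k j; rewrite (ord1 j) [RHS]mxE; apply/eqP.
      by have := h k; rewrite negbK.
    have ndpos : 0 < norm2 md d.
      rewrite n2 sqrtr_gt0; apply: (@lt_le_trans _ _ (md (d k 0) ^+ 2)).
        rewrite exprn_gt0 // lt_def md_ge0 andbT; apply/eqP => /md_eq0 /eqP.
        by rewrite (negbTE hk).
      rewrite /ns (bigD1 k) //= lerDl; apply: sumr_ge0 => l _; exact: sqr_ge0.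
    have mdi : md (d i 0) <= norm2 md d.
      rewrite n2 -(ger0_norm (md_ge0 (d i 0))) -sqrtr_sqr ler_sqrt ?ns_ge0 //.
      rewrite /ns (bigD1 i) //= lerDl; apply: sumr_ge0 => l _; exact: sqr_ge0.
    have hbeta : beta md A K <= norm2 md (A *m d) / norm2 md d.
      apply: ge_inf.
        by exists 0 => y [v _ <-]; apply: divr_ge0; rewrite n2 sqrtr_ge0.
      exists d => //; split => //.
      rewrite /card /K; apply: subset_leq_card; apply/fintype.subsetP => l.
      by rewrite /supp inE; apply: contraR => hl; rewrite dS.
    rewrite ler_pdivlMr // AxS // hASd in hbeta.
    apply: le_trans nPe; apply: le_trans hbeta.
    by rewrite mulrC ler_wpM2l // ltW.
  have hq : md (d i 0) < c * sm / beta md A K.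
    by rewrite ltr_pdivlMr //; exact: le_lt_trans hd heps.
  have hx := hx0 i iS.
  have hm : md (x0 i 0) <= md (z' i 0) + md (d i 0).
    by rewrite -(mdN (d i 0)); apply: le_trans (mdD _ _); rewrite hzi addrK.
  move: hq hx hm h2; set q := c * sm / _; set u := sm / c; lra.
have hzi : z' i 0 = (adj A *m r) i 0.
  by rewrite hz mxE (x'S i niS) add0r.
have hcol : norm2 md (col i A) = Num.sqrt (\sum_l md (A l i) ^+ 2).
  by rewrite /norm2; congr Num.sqrt; apply: eq_bigr => l _; rewrite mxE.
have hc1 : norm2 md (col i A) <= 1.
  apply: le_trans hA; rewrite /norm_inf_col.
  by rewrite (bigD1 i) //= le_max lexx.
have hcs : md (z' i 0) <= norm2 md (col i A) * norm2 md r.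
  rewrite hzi adjAr hcol n2; apply: le_trans; first exact: md_sum.
  under eq_bigr do rewrite mdM mdcj.
  exact: CS_real.
have nc0 : 0 <= norm2 md (col i A) by rewrite n2 sqrtr_ge0.
have nr0 : 0 <= norm2 md r by rewrite n2 sqrtr_ge0.
move: hcs hc1 nc0 nr0 nr heps h1; set u := norm2 md (col i A); set v := norm2 md r.
set w := norm2 md eps; set t := c * sm; nra.
Qed.

End Gen.

Theorem proposition4p7 (R : realType) :
  (* case F = R *)
  (forall (m n : nat) (A : 'M[R]_(m, n)) (mu : R) (x0 : 'cV[R]_n)
          (eps : 'cV[R]_m) (N : nat) (X : 'M[R]_n),
    let cj := (fun a : R => a) in
    let md := (fun a : R => `|a|) in
    let S := supp x0 in
    let K := #|S| in
    let b := A *m x0 + eps in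
    let AS := restr_cols A S in
    let bN := beta md A N in
    norm_inf_col md A <= 1 -> 0 < mu -> (1 <= N)%N ->
    0 < bN -> 0 < beta md A K ->
    is_MP_inverse cj (adj cj AS *m AS) X ->
    let x' := X *m adj cj AS *m b in
    let z' := (1%:M - adj cj A *m A) *m x' + adj cj A *m b in
    norm2 md eps < bN ^+ 2 * Num.sqrt mu ->
    (forall j, j \in S ->
       Num.sqrt mu / bN ^+ 2 + bN ^+ 2 * Num.sqrt mu / beta md A K < md (x0 j 0)) ->
    forall i : 'I_n,
      ~ (bN ^+ 2 * Num.sqrt mu <= md (z' i 0) <= Num.sqrt mu / bN ^+ 2))
  /\
  (* case F = C *)
  (forall (m n : nat) (A : 'M[complex.complex R]_(m, n)) (mu : R)
          (x0 : 'cV[complex.complex R]_n) (eps : 'cV[complex.complex R]_m)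
          (N : nat) (X : 'M[complex.complex R]_n),
    let cj := @complex.conjc R in
    let md := @Cnorm R in
    let S := supp x0 in
    let K := #|S| in
    let b := A *m x0 + eps in
    let AS := restr_cols A S in
    let bN := beta md A N in
    norm_inf_col md A <= 1 -> 0 < mu -> (1 <= N)%N ->
    0 < bN -> 0 < beta md A K ->
    is_MP_inverse cj (adj cj AS *m AS) X ->
    let x' := X *m adj cj AS *m b in
    let z' := (1%:M - adj cj A *m A) *m x' + adj cj A *m b in
    norm2 md eps < bN ^+ 2 * Num.sqrt mu ->
    (forall j, j \in S ->
       Num.sqrt mu / bN ^+ 2 + bN ^+ 2 * Num.sqrt mu / beta md A K < md (x0 j 0)) ->
    forall i : 'I_n,
      ~ (bN ^+ 2 * Num.sqrt mu <= md (z' i 0) <= Num.sqrt mu / bN ^+ 2)).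
Proof.
split.
  move=> m n A mu x0 eps N X.
  apply: (@gen R R (fun a => a) (fun a => `|a|) (fun r => r)).
  - by [].
  - by [].
  - by [].
  - by move=> a /=.
  - by move=> a /= /eqP; rewrite normr_eq0 => /eqP.
  - by rewrite /= normr0.
  - by move=> a b /=; rewrite normrM.
  - by move=> a b /=; rewrite ler_normD.
  - by move=> a /=; rewrite normrN.
  - by [].
  - by [].
  - by move=> ? ?.
  - by move=> a /=; rewrite real_normK ?num_real // expr2.
move=> m n A mu x0 eps N X.
apply: (@gen R (complex.complex R) (@complex.conjc R) (@Cnorm R) (fun r => r%:C)%C).
- by move=> a b; rewrite raddfD.
- by move=> a b; rewrite rmorphM.
- exact: conjcK.
- by case=> a b; rewrite /Cnorm /= sqrtr_ge0.
- exact: ComplexField.Normc.eq0_normc.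
- exact: ComplexField.Normc.normc0.
- exact: ComplexField.Normc.normcM.
- exact: le_normcD.
- exact: normcN.
- by case=> a b; rewrite /Cnorm /= sqrrN.
- by move=> r s; rewrite raddfD.
- exact: complexI.
- case=> a b; rewrite /Cnorm /= sqr_sqrtr ?addr_ge0 ?sqr_ge0 //.
  by apply/eqP; rewrite eq_complex /=; apply/andP; split; apply/eqP; ring.
Qed.
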